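(* Let $I\subset\mathbb{R}$ be an interval and let $K,M,N\colon I^2\to I$ be arbitrary means. Then $K$ is the unique $(M,N)$-invariant mean if and only if the sequence of iterates $\big((M,N)^n\big)_{n\in\mathbb{N}}$ converges to $(K,K)$ pointwise on $I^2$.
   Context: A function $K\colon I^2\to\mathbb{R}$ is a mean in $I$ if $\min(x,y)\le K(x,y)\le\max(x,y)$ for all $x,y\in I$; no continuity is assumed. $(M,N)^n$ denotes the $n$-th iterate of the map $(x,y)\mapsto(M(x,y),N(x,y))$. A mean $K$ is $(M,N)$-invariant if $K(M(x,y),N(x,y))=K(x,y)$ for all $x,y\in I$. *)

(* Defs.v *)
From Stdlib Require Import Reals.
Open Scope R_scope.

Definition is_interval (I : R -> Prop) : Prop :=
  forall x y z, I x -> I z -> x <= y <= z -> I y.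

(* K is a mean in I (no continuity assumed). Since I is convex, such a K
   automatically maps I^2 into I. *)
Definition is_mean (I : R -> Prop) (K : R -> R -> R) : Prop :=
  forall x y, I x -> I y -> Rmin x y <= K x y <= Rmax x y.

Definition MN_map (M N : R -> R -> R) (p : R * R) : R * R :=
  (M (fst p) (snd p), N (fst p) (snd p)).

Definition MN_iter (M N : R -> R -> R) (n : nat) (p : R * R) : R * R :=
  Nat.iter n (MN_map M N) p.

Definition is_invariant (I : R -> Prop) (M N K : R -> R -> R) : Prop :=
  forall x y, I x -> I y -> K (M x y) (N x y) = K x y.

Definition unique_invariant_mean (I : R -> Prop) (M N K : R -> R -> R) : Prop :=
  is_mean I K /\ is_invariant I M N K /\
  forall K' : R -> R -> R, is_mean I K' -> is_invariant I M N K' ->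
    forall x y, I x -> I y -> K' x y = K x y.

Definition iterates_converge_to (I : R -> Prop) (M N K : R -> R -> R) : Prop :=
  forall x y, I x -> I y ->
    Un_cv (fun n => fst (MN_iter M N n (x, y))) (K x y) /\
    Un_cv (fun n => snd (MN_iter M N n (x, y))) (K x y).

(* Main.v *)
Require Import Defs.
From Stdlib Require Import Reals.
Open Scope R_scope.
From Stdlib Require Import Lra Lia FunctionalExtensionality.
From Coquelicot Require Import Coquelicot.

Lemma mean_in (I : R -> Prop) (M : R -> R -> R) x y :
  is_interval I -> is_mean I M -> I x -> I y -> I (M x y).
Proof.
  intros HI HM Hx Hy. destruct (HM x y Hx Hy) as [H1 H2].
  unfold Rmin, Rmax in *. destruct (Rle_dec x y).
  - apply (HI x _ y); auto.
  - apply (HI y _ x); auto; lra.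
Qed.

Lemma iter_in I M N n x y : is_interval I -> is_mean I M -> is_mean I N -> I x -> I y ->
  I (fst (MN_iter M N n (x, y))) /\ I (snd (MN_iter M N n (x, y))).
Proof.
  intros HI HM HN Hx Hy. induction n as [|n [IH1 IH2]]; simpl; auto.
  unfold MN_iter in *; simpl. split; eapply mean_in; eauto.
Qed.

Lemma iter_S M N n p : MN_iter M N (S n) p = MN_iter M N n (MN_map M N p).
Proof. unfold MN_iter. apply Nat.iter_succ_r. Qed.

Lemma iter_S' M N n p : MN_iter M N (S n) p = MN_map M N (MN_iter M N n p).
Proof. reflexivity. Qed.

Lemma between_close a b c L e : Rmin a b <= c <= Rmax a b ->
  Rabs (a - L) < e -> Rabs (b - L) < e -> Rabs (c - L) < e.
Proof.
  unfold Rmin, Rmax; destruct (Rle_dec a b); intros [H1 H2] Ha Hb;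
  apply Rabs_def2 in Ha; apply Rabs_def2 in Hb; apply Rabs_def1; lra.
Qed.

Definition mn M N x y n := Rmin (fst (MN_iter M N n (x, y))) (snd (MN_iter M N n (x, y))).
Definition mx M N x y n := Rmax (fst (MN_iter M N n (x, y))) (snd (MN_iter M N n (x, y))).

Section S.
Variables (I : R -> Prop) (M N : R -> R -> R).
Hypotheses (HI : is_interval I) (HM : is_mean I M) (HN : is_mean I N).

Lemma mn_grow x y : I x -> I y -> Un_growing (mn M N x y).
Proof.
  intros Hx Hy n. destruct (iter_in I M N n x y HI HM HN Hx Hy) as [H1 H2].
  unfold mn. rewrite iter_S'. unfold MN_map; simpl.
  destruct (MN_iter M N n (x, y)) as [a b]; simpl in *.
  destruct (HM a b H1 H2). destruct (HN a b H1 H2).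
  apply Rmin_glb; auto.
Qed.

Lemma mx_decr x y : I x -> I y -> Un_decreasing (mx M N x y).
Proof.
  intros Hx Hy n. destruct (iter_in I M N n x y HI HM HN Hx Hy) as [H1 H2].
  unfold mx. rewrite iter_S'. unfold MN_map; simpl.
  destruct (MN_iter M N n (x, y)) as [a b]; simpl in *.
  destruct (HM a b H1 H2). destruct (HN a b H1 H2).
  apply Rmax_lub; auto.
Qed.

Lemma mn_le_mx x y n : mn M N x y n <= mx M N x y n.
Proof.
  unfold mn, mx. eapply Rle_trans. apply Rmin_l. apply Rmax_l.
Qed.

Lemma mn_cv x y : I x -> I y -> {l | Un_cv (mn M N x y) l}.
Proof.
  intros Hx Hy. apply growing_cv. apply mn_grow; auto.
  exists (mx M N x y 0). intros z [n ->].
  eapply Rle_trans. apply mn_le_mx.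
  assert (D := mx_decr x y Hx Hy).
  induction n. lra. eapply Rle_trans. apply D. auto.
Qed.

Lemma mx_cv x y : I x -> I y -> {l | Un_cv (mx M N x y) l}.
Proof.
  intros Hx Hy. apply decreasing_cv. apply mx_decr; auto.
  exists (- mn M N x y 0). intros z [n ->]. unfold opp_seq.
  apply Ropp_le_contravar.
  eapply Rle_trans. 2: apply mn_le_mx.
  assert (D := mn_grow x y Hx Hy).
  induction n. lra. eapply Rle_trans. apply IHn. apply D.
Qed.

Definition Kmn x y := real (Lim_seq (mn M N x y)).
Definition Kmx x y := real (Lim_seq (mx M N x y)).

Lemma mn_shift x y : mn M N (M x y) (N x y) = fun n => mn M N x y (S n).
Proof. apply functional_extensionality; intro n. unfold mn. rewrite iter_S. reflexivity. Qed.
Lemma mx_shift x y : mx M N (M x y) (N x y) = fun n => mx M N x y (S n).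
Proof. apply functional_extensionality; intro n. unfold mx. rewrite iter_S. reflexivity. Qed.

Lemma Kmn_inv : is_invariant I M N Kmn.
Proof. intros x y _ _. unfold Kmn. rewrite mn_shift, Lim_seq_incr_1. reflexivity. Qed.
Lemma Kmx_inv : is_invariant I M N Kmx.
Proof. intros x y _ _. unfold Kmx. rewrite mx_shift, Lim_seq_incr_1. reflexivity. Qed.

Lemma Kmn_spec x y (Hx : I x) (Hy : I y) : Un_cv (mn M N x y) (Kmn x y).
Proof.
  destruct (mn_cv x y Hx Hy) as [l Hl]. unfold Kmn.
  rewrite (is_lim_seq_unique _ l). exact Hl. apply is_lim_seq_Reals; auto.
Qed.
Lemma Kmx_spec x y (Hx : I x) (Hy : I y) : Un_cv (mx M N x y) (Kmx x y).
Proof.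
  destruct (mx_cv x y Hx Hy) as [l Hl]. unfold Kmx.
  rewrite (is_lim_seq_unique _ l). exact Hl. apply is_lim_seq_Reals; auto.
Qed.

Lemma Kmn_Kmx x y (Hx : I x) (Hy : I y) : Kmn x y <= Kmx x y.
Proof.
  assert (H := is_lim_seq_le _ _ _ _ (mn_le_mx x y)
    (proj2 (is_lim_seq_Reals _ _) (Kmn_spec x y Hx Hy))
    (proj2 (is_lim_seq_Reals _ _) (Kmx_spec x y Hx Hy))). exact H.
Qed.

Lemma Kmn_mean : is_mean I Kmn.
Proof.
  intros x y Hx Hy. split.
  - apply (growing_ineq _ _ (mn_grow x y Hx Hy) (Kmn_spec x y Hx Hy) 0).
  - eapply Rle_trans. apply Kmn_Kmx; auto.
    assert (H := decreasing_ineq _ _ (mx_decr x y Hx Hy) (Kmx_spec x y Hx Hy) 0).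
    exact H.
Qed.

Lemma Kmx_mean : is_mean I Kmx.
Proof.
  intros x y Hx Hy. split.
  - eapply Rle_trans. 2: apply Kmn_Kmx; auto.
    apply (growing_ineq _ _ (mn_grow x y Hx Hy) (Kmn_spec x y Hx Hy) 0).
  - assert (H := decreasing_ineq _ _ (mx_decr x y Hx Hy) (Kmx_spec x y Hx Hy) 0).
    exact H.
Qed.

End S.

Theorem mainTheorem4 (I : R -> Prop) (K M N : R -> R -> R) :
  is_interval I -> is_mean I K -> is_mean I M -> is_mean I N ->
  (unique_invariant_mean I M N K <-> iterates_converge_to I M N K).
Proof.
  intros HI HK HM HN. split.
  - intros [_ [_ U]] x y Hx Hy.
    assert (E1 := U _ (Kmn_mean I M N HI HM HN) (Kmn_inv I M N) x y Hx Hy).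
    assert (E2 := U _ (Kmx_mean I M N HI HM HN) (Kmx_inv I M N) x y Hx Hy).
    assert (C1 := Kmn_spec I M N HI HM HN x y Hx Hy).
    assert (C2 := Kmx_spec I M N HI HM HN x y Hx Hy).
    rewrite E1 in C1. rewrite E2 in C2.
    apply is_lim_seq_Reals in C1. apply is_lim_seq_Reals in C2.
    split; apply is_lim_seq_Reals;
      [ apply (is_lim_seq_le_le _ _ _ _ (fun n => conj (Rmin_l _ _) (Rmax_l _ _)) C1 C2)
      | apply (is_lim_seq_le_le _ _ _ _ (fun n => conj (Rmin_r _ _) (Rmax_r _ _)) C1 C2) ].
  - intros C. split; [exact HK|split].
    + intros x y Hx Hy.
      assert (HMx := mean_in I M x y HI HM Hx Hy).
      assert (HNx := mean_in I N x y HI HN Hx Hy).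
      destruct (C _ _ HMx HNx) as [C1 _].
      destruct (C _ _ Hx Hy) as [D1 _].
      apply (UL_sequence (fun n => fst (MN_iter M N n (M x y, N x y)))); auto.
      intros e He. destruct (D1 e He) as [n0 Hn0]. exists n0. intros n Hn.
      change (M x y, N x y) with (MN_map M N (x, y)). rewrite <- iter_S.
      apply Hn0. lia.
    + intros K' HK' Hinv x y Hx Hy.
      assert (E : forall n, K' (fst (MN_iter M N n (x, y))) (snd (MN_iter M N n (x, y))) = K' x y).
      { induction n. reflexivity. rewrite iter_S'.
        destruct (iter_in I M N n x y HI HM HN Hx Hy) as [H1 H2].
        destruct (MN_iter M N n (x, y)) as [a b]. simpl in *.
        rewrite Hinv; auto. }
      apply cond_eq. intros e He.
      destruct (C x y Hx Hy) as [C1 C2].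
      destruct (C1 e He) as [n1 Hn1]. destruct (C2 e He) as [n2 Hn2].
      set (n := max n1 n2).
      rewrite <- (E n).
      destruct (iter_in I M N n x y HI HM HN Hx Hy) as [H1 H2].
      apply between_close with (fst (MN_iter M N n (x, y))) (snd (MN_iter M N n (x, y))).
      * apply HK'; auto.
      * apply Hn1. unfold n; lia.
      * apply Hn2. unfold n; lia.
Qed.
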